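(* On $\mathbb{R}^4$ let $H^1,H^2,H^3$ be constant-coefficient 2-forms with $H^i\wedge H^j=2\delta^{ij}\,\mathrm{vol}$ for a nonvanishing constant 4-form $\mathrm{vol}$, let $M>0$ be a constant, let $a^i$ ($i=1,2,3$) be smooth 1-forms and $\Psi_{ij}$ smooth functions, symmetric and tracefree ($\delta^{ij}\Psi_{ij}=0$). Define the Lagrangian 4-form $$L=\Psi_{ij}\left(M^2H^i\wedge da^j+\tfrac12\,da^i\wedge da^j\right).$$ For an arbitrary smooth vector field $\eta$ and arbitrary smooth functions $\xi^i$, consider the infinitesimal transformation $$\delta a^i=d\xi^i+i_\eta\big(M^2H^i+da^i\big),\qquad \delta\Psi_{ij}=i_\eta d\Psi_{ij}.$$ Then the first-order variation $\delta L$ is an exact 4-form; explicitly $\delta L=d\,(i_\eta L)$. In particular the action $\int L$ is invariant up to boundary terms.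
   Context: $i_\eta$ denotes interior product with the vector field $\eta$. *)

(* Defs.v *)
From mathcomp Require Import all_boot all_order all_algebra.
From mathcomp Require Import all_classical all_reals all_analysis.
Set Implicit Arguments. Unset Strict Implicit. Unset Printing Implicit Defensive.
Import Order.TTheory GRing.Theory Num.Theory.
Import numFieldNormedType.Exports.
Local Open Scope ring_scope.

(* Differential forms on R^4 in coordinates x^0..x^3.  A (possibly
   inhomogeneous) form is given by its components in the basis
   dx^S = dx^{s_1} /\ ... /\ dx^{s_k}, s_1 < ... < s_k, S = {s_1,...,s_k}. *)

Notation pt R := ('rV[R]_4).
Definition diffform (R : realType) := {set 'I_4} -> pt R -> R.

Definition ecoord (R : realType) (k : 'I_4) : pt R := delta_mx 0 k.

Definition partial (R : realType) (k : 'I_4) (f : pt R -> R) : pt R -> R :=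
  fun x => 'D_(ecoord R k) f x.

Definition iter_partial (R : realType) (s : seq 'I_4) (f : pt R -> R) :=
  foldr (@partial R) f s.

Definition smooth (R : realType) (f : pt R -> R) : Prop :=
  forall (s : seq 'I_4) (x : pt R), differentiable (iter_partial s f) x.

Definition smooth_form (R : realType) (w : diffform R) := forall S : {set 'I_4}, smooth (w S).
Definition is_deg (R : realType) (k : nat) (w : diffform R) :=
  forall S : {set 'I_4}, #|S| != k -> w S = (fun _ => 0).
Definition constant_form (R : realType) (w : diffform R) :=
  forall (S : {set 'I_4}) (x y : pt R), w S x = w S y.

(* sign of the permutation sorting (A,B) *)
Definition ninv (A B : {set 'I_4}) : nat :=
  #|[set p : 'I_4 * 'I_4 | [&& p.1 \in A, p.2 \in B & (p.2 < p.1)%N]]|.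
Definition sgn (R : realType) (A B : {set 'I_4}) : R := (-1) ^+ ninv A B.

(* dx^A /\ dx^B = sgn A B dx^(A u B) for disjoint A, B *)
Definition wedge (R : realType) (a b : diffform R) : diffform R :=
  fun S x => \sum_(A : {set 'I_4} | A \subset S)
               sgn R A (S :\: A) * a A x * b (S :\: A) x.

Definition dform (R : realType) (w : diffform R) : diffform R :=
  fun S x => \sum_(k in S) sgn R (finset.set1 k) (S :\ k) * partial k (w (S :\ k)) x.

(* iprod product with the vector field eta = sum_k eta_k d/dx^k *)
Definition iprod (R : realType) (eta : 'I_4 -> pt R -> R) (w : diffform R)
  : diffform R :=
  fun S x => \sum_(k : 'I_4 | k \notin S) eta k x * sgn R (finset.set1 k) S * w (k |: S) x.

Definition fn0 (R : realType) (f : pt R -> R) : diffform R :=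
  fun S x => if S == finset.set0 then f x else 0.

Definition Lag (R : realType) (M : R) (H : 'I_3 -> diffform R)
  (Psi : 'I_3 -> 'I_3 -> pt R -> R) (a : 'I_3 -> diffform R) : diffform R :=
  fun S x => \sum_(i < 3) \sum_(j < 3)
    Psi i j x * (M ^+ 2 * wedge (H i) (dform (a j)) S x
                 + 2^-1 * wedge (dform (a i)) (dform (a j)) S x).

(* First-order variation of L under a -> a + eps*da', Psi -> Psi + eps*dPsi
   (the term linear in eps). *)
Definition Lag_variation (R : realType) (M : R) (H : 'I_3 -> diffform R)
  (Psi : 'I_3 -> 'I_3 -> pt R -> R) (a : 'I_3 -> diffform R)
  (dPsi : 'I_3 -> 'I_3 -> pt R -> R) (da' : 'I_3 -> diffform R) : diffform R :=
  fun S x => \sum_(i < 3) \sum_(j < 3)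
    (dPsi i j x * (M ^+ 2 * wedge (H i) (dform (a j)) S x
                   + 2^-1 * wedge (dform (a i)) (dform (a j)) S x)
     + Psi i j x * (M ^+ 2 * wedge (H i) (dform (da' j)) S x
                   + 2^-1 * (wedge (dform (da' i)) (dform (a j)) S x
                             + wedge (dform (a i)) (dform (da' j)) S x))).

(* Main.v *)
Require Import Defs.
From mathcomp Require Import all_boot all_order all_algebra.
From mathcomp Require Import all_classical all_reals all_analysis.
From mathcomp Require Import ring lra.
Set Implicit Arguments. Unset Strict Implicit. Unset Printing Implicit Defensive.
Import Order.TTheory GRing.Theory Num.Theory.
Import numFieldNormedType.Exports.
Local Open Scope ring_scope.

Notation o0 := (@Ordinal 4 0 isT).
Notation o1 := (@Ordinal 4 1 isT).
Notation o2 := (@Ordinal 4 2 isT).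
Notation o3 := (@Ordinal 4 3 isT).

Definition mk (b0 b1 b2 b3 : bool) : {set 'I_4} :=
  [set i : 'I_4 | nth false [:: b0; b1; b2; b3] i].

Lemma ord4P (P : 'I_4 -> Prop) : P o0 -> P o1 -> P o2 -> P o3 -> forall i, P i.
Proof.
move=> h0 h1 h2 h3 [[|[|[|[|n]]]] Hi] //.
- by rewrite (_ : Ordinal Hi = o0) //; apply: val_inj.
- by rewrite (_ : Ordinal Hi = o1) //; apply: val_inj.
- by rewrite (_ : Ordinal Hi = o2) //; apply: val_inj.
- by rewrite (_ : Ordinal Hi = o3) //; apply: val_inj.
Qed.

Lemma mkE (S : {set 'I_4}) : S = mk (o0 \in S) (o1 \in S) (o2 \in S) (o3 \in S).
Proof. by apply/setP; apply: ord4P; rewrite inE. Qed.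

Lemma in_mk b0 b1 b2 b3 (i : 'I_4) :
  (i \in mk b0 b1 b2 b3) = nth false [:: b0; b1; b2; b3] i.
Proof. by rewrite inE. Qed.

Lemma mk_setU1 b0 b1 b2 b3 (k : 'I_4) :
  k |: mk b0 b1 b2 b3 = mk (b0 || (k == 0 :> nat)) (b1 || (k == 1 :> nat))
                           (b2 || (k == 2 :> nat)) (b3 || (k == 3 :> nat)).
Proof.
apply/setP; apply: ord4P; rewrite !inE; move: k; apply: ord4P => //=;
by rewrite ?orbF ?orbT.
Qed.

Lemma mk_setD1 b0 b1 b2 b3 (k : 'I_4) :
  mk b0 b1 b2 b3 :\ k = mk (b0 && (k != 0 :> nat)) (b1 && (k != 1 :> nat))
                           (b2 && (k != 2 :> nat)) (b3 && (k != 3 :> nat)).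
Proof.
apply/setP; apply: ord4P; rewrite !inE; move: k; apply: ord4P => //=;
by rewrite ?andbF ?andbT.
Qed.

Lemma mk_set1 (k : 'I_4) :
  [set k] = mk (k == 0 :> nat) (k == 1 :> nat) (k == 2 :> nat) (k == 3 :> nat).
Proof.
apply/setP; apply: ord4P; rewrite !inE; move: k; apply: ord4P => //=.
Qed.

Lemma mk_setD a0 a1 a2 a3 b0 b1 b2 b3 :
  mk a0 a1 a2 a3 :\: mk b0 b1 b2 b3 = mk (a0 && ~~ b0) (a1 && ~~ b1) (a2 && ~~ b2) (a3 && ~~ b3).
Proof. by apply/setP; apply: ord4P; rewrite !inE /= andbC. Qed.

Lemma mk_setT : [set: 'I_4] = mk true true true true.
Proof. by apply/setP; apply: ord4P; rewrite !inE. Qed.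

Lemma mk_set0 : (finset.set0 : {set 'I_4}) = mk false false false false.
Proof. by apply/setP; apply: ord4P; rewrite !inE. Qed.

Lemma mk_subset a0 a1 a2 a3 b0 b1 b2 b3 :
  (mk a0 a1 a2 a3 \subset mk b0 b1 b2 b3) =
  [&& a0 ==> b0, a1 ==> b1, a2 ==> b2 & a3 ==> b3].
Proof.
apply/fintype.subsetP/idP.
- move=> h; apply/and4P; split; apply/implyP => ha.
  + by have := h o0; rewrite !inE /=; apply.
  + by have := h o1; rewrite !inE /=; apply.
  + by have := h o2; rewrite !inE /=; apply.
  + by have := h o3; rewrite !inE /=; apply.
- move=> /and4P[h0 h1 h2 h3]; apply: ord4P; rewrite !inE /=; by apply/implyP.
Qed.

Lemma sum4 (V : nmodType) (F : 'I_4 -> V) :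
  \sum_(k < 4) F k = F o0 + F o1 + F o2 + F o3.
Proof.
rewrite !big_ord_recr big_ord0 /= add0r.
by congr (_ + _ + _ + _); congr F; apply: val_inj.
Qed.

Lemma sum4n (F : 'I_4 -> nat) :
  (\sum_(k < 4) F k = F o0 + F o1 + F o2 + F o3)%N.
Proof.
rewrite !big_ord_recr big_ord0 /=.
by congr (_ + _ + _ + _)%N; congr F; apply: val_inj.
Qed.

Lemma card_mk b0 b1 b2 b3 : #|mk b0 b1 b2 b3| = (b0 + b1 + b2 + b3)%N.
Proof.
rewrite -sum1_card big_mkcond /= sum4n !in_mk /=.
by case: b0; case: b1; case: b2; case: b3.
Qed.

Lemma sum_pair4n (F : 'I_4 * 'I_4 -> nat) :
  (\sum_(p : 'I_4 * 'I_4) F p = \sum_(i < 4) \sum_(j < 4) F (i, j))%N.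
Proof. by rewrite pair_bigA; apply: eq_bigr => -[]. Qed.

Lemma ninv_mk a0 a1 a2 a3 b0 b1 b2 b3 :
  ninv (mk a0 a1 a2 a3) (mk b0 b1 b2 b3) =
  ((a1 && b0) + (a2 && b0) + (a2 && b1) + (a3 && b0) + (a3 && b1) + (a3 && b2))%N.
Proof.
rewrite /ninv -sum1_card big_mkcond /=.
rewrite sum_pair4n.
rewrite sum4n !sum4n !inE /=.
by case: a0; case: a1; case: a2; case: a3; case: b0; case: b1; case: b2; case: b3.
Qed.

Lemma sgn_mk (R : realType) a0 a1 a2 a3 b0 b1 b2 b3 :
  sgn R (mk a0 a1 a2 a3) (mk b0 b1 b2 b3) =
  if odd (Nat.add (Nat.add (Nat.add (Nat.add (Nat.add (a1 && b0) (a2 && b0)) (a2 && b1)) (a3 && b0)) (a3 && b1)) (a3 && b2))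
  then -1 else 1.
Proof.
rewrite /sgn ninv_mk -signr_odd.
by case: odd; rewrite ?expr1 ?expr0.
Qed.

Lemma sum_sets (V : nmodType) (F : {set 'I_4} -> V) :
  \sum_(A : {set 'I_4}) F A =
  \sum_(b0 : bool) \sum_(b1 : bool) \sum_(b2 : bool) \sum_(b3 : bool) F (mk b0 b1 b2 b3).
Proof.
pose h (p : bool * bool * bool * bool) := mk p.1.1.1 p.1.1.2 p.1.2 p.2.
pose hi (A : {set 'I_4}) := (o0 \in A, o1 \in A, o2 \in A, o3 \in A).
rewrite (reindex h); last first.
  exists hi => [[[[c0 c1] c2] c3] _ | A _]; first by rewrite /hi /h /= !in_mk.
  by rewrite /h /hi /= -mkE.
transitivity (\sum_(p : bool * bool * bool) \sum_(b3 : bool) F (mk p.1.1 p.1.2 p.2 b3)).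
  by rewrite [RHS]pair_bigA.
transitivity (\sum_(p : bool * bool) \sum_(b2 : bool) \sum_(b3 : bool) F (mk p.1 p.2 b2 b3)).
  by rewrite [RHS]pair_bigA.
by rewrite [RHS]pair_bigA.
Qed.

Ltac kz h :=
  try (rewrite (h (mk false false false false)); last by rewrite card_mk);
  try (rewrite (h (mk false false false true)); last by rewrite card_mk);
  try (rewrite (h (mk false false true false)); last by rewrite card_mk);
  try (rewrite (h (mk false false true true)); last by rewrite card_mk);
  try (rewrite (h (mk false true false false)); last by rewrite card_mk);
  try (rewrite (h (mk false true false true)); last by rewrite card_mk);
  try (rewrite (h (mk false true true false)); last by rewrite card_mk);
  try (rewrite (h (mk false true true true)); last by rewrite card_mk);
  try (rewrite (h (mk true false false false)); last by rewrite card_mk);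
  try (rewrite (h (mk true false false true)); last by rewrite card_mk);
  try (rewrite (h (mk true false true false)); last by rewrite card_mk);
  try (rewrite (h (mk true false true true)); last by rewrite card_mk);
  try (rewrite (h (mk true true false false)); last by rewrite card_mk);
  try (rewrite (h (mk true true false true)); last by rewrite card_mk);
  try (rewrite (h (mk true true true false)); last by rewrite card_mk);
  try (rewrite (h (mk true true true true)); last by rewrite card_mk).

Notation s01 := (mk true true false false).
Notation s02 := (mk true false true false).
Notation s03 := (mk true false false true).
Notation s12 := (mk false true true false).
Notation s13 := (mk false true false true).
Notation s23 := (mk false false true true).

Definition W22_def (R : realType) (A B : diffform R) x :=
  A s01 x * B s23 x - A s02 x * B s13 x + A s03 x * B s12 x
  + A s12 x * B s03 x - A s13 x * B s02 x + A s23 x * B s01 x.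
Fact W22_key : unit. Proof. exact: tt. Qed.
Definition W22 (R : realType) := locked_with W22_key (@W22_def R).

Lemma W22Ef (R : realType) (A B : diffform R) : W22 A B = fun x =>
  A s01 x * B s23 x - A s02 x * B s13 x + A s03 x * B s12 x
  + A s12 x * B s03 x - A s13 x * B s02 x + A s23 x * B s01 x.
Proof. by rewrite /W22 unlock. Qed.

Lemma wedge22_top (R : realType) (A B : diffform R) x :
  is_deg 2 A -> is_deg 2 B -> wedge A B [set: 'I_4] x = W22 A B x.
Proof.
move=> hA hB.
rewrite /wedge mk_setT big_mkcond sum_sets !big_bool /= !mk_subset /= !mk_setD /=.
rewrite !sgn_mk /=.
kz hA. kz hB. rewrite W22Ef /=. ring.
Qed.

Section Calc.
Variable R : realType.
Implicit Types (f g : pt R -> R) (x : pt R) (k : 'I_4).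

Lemma dD f g x : differentiable f x -> differentiable g x ->
  differentiable (fun y => f y + g y) x.
Proof. move=> hf hg; exact: (differentiableD hf hg). Qed.

Lemma dM f g x : differentiable f x -> differentiable g x ->
  differentiable (fun y => f y * g y) x.
Proof. move=> hf hg; exact: (differentiableM hf hg). Qed.

Lemma dC (c : R) x : differentiable (fun _ : pt R => c) x.
Proof. exact: differentiable_cst. Qed.

Lemma dN f x : differentiable f x -> differentiable (fun y => - f y) x.
Proof. move=> hf; exact: (differentiableN hf). Qed.

Lemma pD k f g x : differentiable f x -> differentiable g x ->
  partial k (fun y => f y + g y) x = partial k f x + partial k g x.
Proof.
move=> hf hg; rewrite /partial.
have -> : (fun y => f y + g y) = (f + g) by [].
exact: (deriveD (diff_derivable hf) (diff_derivable hg)).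
Qed.

Lemma pM k f g x : differentiable f x -> differentiable g x ->
  partial k (fun y => f y * g y) x = partial k f x * g x + f x * partial k g x.
Proof.
move=> hf hg; rewrite /partial.
have -> : (fun y => f y * g y) = (f * g) by [].
rewrite (deriveM (diff_derivable hf) (diff_derivable hg)); rewrite /GRing.scale /=; ring.
Qed.

Lemma pC k (c : R) x : partial k (fun _ => c) x = 0.
Proof. exact: (derive_cst c). Qed.

Lemma pMc k (c : R) f x : differentiable f x ->
  partial k (fun y => c * f y) x = c * partial k f x.
Proof. by move=> hf; rewrite pM ?pC ?mul0r ?add0r //; apply: dC. Qed.

Lemma pN k f x : differentiable f x ->
  partial k (fun y => - f y) x = - partial k f x.
Proof.
move=> hf; rewrite (_ : (fun y => - f y) = (fun y => (-1) * f y)).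
  by rewrite pMc // mulN1r.
by apply: funext => y; rewrite mulN1r.
Qed.

Lemma pSum (I : Type) (r : seq I) (P : pred I) (F : I -> pt R -> R) k x :
  (forall i, differentiable (F i) x) ->
  partial k (fun y => \sum_(i <- r | P i) F i y) x = \sum_(i <- r | P i) partial k (F i) x.
Proof.
move=> hF; elim: r => [|i r IH].
  rewrite big_nil; under eq_fun do rewrite big_nil; exact: pC.
rewrite big_cons; under eq_fun do rewrite big_cons.
case: (P i); last exact: IH.
rewrite pD ?IH //.
elim: r {IH} => [|j r IH]; first by under eq_fun do rewrite big_nil; apply: dC.
under eq_fun do rewrite big_cons; case: (P j) => //; exact: dD.
Qed.

Lemma dSum (I : Type) (r : seq I) (P : pred I) (F : I -> pt R -> R) x :
  (forall i, differentiable (F i) x) ->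
  differentiable (fun y => \sum_(i <- r | P i) F i y) x.
Proof.
move=> hF; elim: r => [|j r IH]; first by under eq_fun do rewrite big_nil; apply: dC.
under eq_fun do rewrite big_cons; case: (P j) => //; exact: dD.
Qed.

Lemma smooth_diff f x : smooth f -> differentiable f x.
Proof. by move=> h; exact: (h [::] x). Qed.

Lemma smooth_partial k f : smooth f -> smooth (partial k f).
Proof. by move=> h s x; have := h (s ++ [:: k]) x; rewrite /iter_partial foldr_cat. Qed.

Lemma smooth_cst (c : R) : smooth (fun _ => c).
Proof.
move=> s x; suff -> : iter_partial s (fun _ : pt R => c) = fun _ => (if s is [::] then c else 0).
  exact: dC.
elim: s => [//|k s IH] /=; rewrite IH; apply: funext => y; exact: pC.
Qed.

End Calc.

Section Schwarz.
Variable R : realType.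
Implicit Types (f g : pt R -> R) (x u v p : pt R).

Lemma line_quot f u p (s : R) :
  (fun h : R => h^-1 *: (((fun r : R => f (r *: u + p)) \o shift s) (h *: 1) - f (s *: u + p)))
  = (fun h : R => h^-1 *: ((f \o shift (s *: u + p)) (h *: u) - f (s *: u + p))).
Proof.
apply: funext => h /=; congr (_ *: (f _ - _)).
by rewrite -[h *: (1:R)]/(h * 1) mulr1 scalerDl addrA.
Qed.

Lemma line_derive f u p (s : R) : differentiable f (s *: u + p) ->
  is_derive s 1 (fun r : R => f (r *: u + p)) ('D_u f (s *: u + p)).
Proof.
move=> hf; have hd : derivable f (s *: u + p) u := diff_derivable hf.
apply: DeriveDef.
  by rewrite /derivable line_quot.
by rewrite /derive line_quot.
Qed.

Lemma diff_eps g x : differentiable g x -> forall e : R, 0 < e ->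
  exists2 d : R, 0 < d & forall y, `|y| < d -> `|g (y + x) - g x - 'd g x y| <= e * `|y|.
Proof.
move=> hg e e0; have /eqaddoP H := diff_locally hg.
have := H e e0; move=> /nbhs_norm0P [d /= d0 Hd]; exists d => // y hy.
have := Hd y hy; rewrite /=.
by rewrite opprD addrA.
Qed.


Lemma schwarz_est f u v x :
  (forall y, differentiable f y) -> (forall y, differentiable (fun a => 'D_v f a) y) ->
  forall e : R, 0 < e -> exists2 d : R, 0 < d & forall t : R, 0 < t -> t < d ->
   `| f (t *: u + t *: v + x) - f (t *: v + x) - f (t *: u + x) + f x
      - t ^+ 2 * 'D_u (fun a => 'D_v f a) x | <= e * (2 * (`|u| + `|v|)) * t ^+ 2.
Proof.
move=> hf hg e e0.
set g := fun a => 'D_v f a.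
have [d d0 Hd] := diff_eps (hg x) e0.
set C := `|u| + `|v|.
have C0 : 0 <= C by rewrite /C addr_ge0.
exists (d / (C + 1)); first by rewrite divr_gt0 // ltr_wpDl.
move=> t t0 td.
pose phi := fun s : R => f (s *: v + (t *: u + x)) - f (s *: v + x).
pose dphi := fun s : R => g (s *: v + (t *: u + x)) - g (s *: v + x).
have phid : forall s : R, is_derive s (1:R) phi (dphi s).
  move=> s; have := is_deriveB (@line_derive f v (t *: u + x) s (hf _))
                              (@line_derive f v x s (hf _)).
  by [].
have [c c0t eq] : exists2 c, c \in `]0, t[%R & phi t - phi 0 = dphi c * (t - 0).
  apply: (@MVT R phi dphi 0 t t0).
  apply: continuous_subspaceT; move=> s.
  have /derivable1_diffP/differentiable_continuous := @ex_derive _ _ _ _ _ _ _ (phid s).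
  by [].
move: c0t; rewrite in_itv /= => /andP[c0 ct].
set y1 := c *: v + t *: u.
set y2 := c *: v.
have nu := normr_ge0 u; have nv := normr_ge0 v.
have ny1 : `|y1| <= t * C.
  apply: (le_trans (ler_normD _ _)).
  rewrite !normrZ (ger0_norm (ltW c0)) (ger0_norm (ltW t0)) /C.
  by rewrite mulrDr [t * _ + _]addrC lerD2r ler_wpM2r // ltW.
have ny2 : `|y2| <= t * C.
  rewrite /y2 normrZ (ger0_norm (ltW c0)) /C mulrDr.
  apply: (le_trans (y := t * `|v|)); first by rewrite ler_wpM2r // ltW.
  by rewrite lerDr mulr_ge0 // ltW.
have tCd : t * C < d.
  have : t * (C + 1) < d by rewrite -ltr_pdivlMr // ltr_wpDl.
  by apply: le_lt_trans; apply: ler_wpM2l; [exact: ltW | rewrite lerDl].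
have H1 := Hd y1 (le_lt_trans ny1 tCd).
have H2 := Hd y2 (le_lt_trans ny2 tCd).
have lin : 'd g x y1 = 'd g x y2 + t * 'd g x u.
  by rewrite /y1 linearD; congr (_ + _); exact: linearZ.
have DE : 'D_u g x = 'd g x u by rewrite deriveE.
have e1 : f (t *: u + t *: v + x) - f (t *: v + x) - f (t *: u + x) + f x
          = phi t - phi 0.
  rewrite /phi scale0r !add0r addrCA addrA; ring.
rewrite e1 eq DE subr0.
have -> : dphi c * t - t ^+ 2 * 'd g x u =
   t * ((g (y1 + x) - g x - 'd g x y1) - (g (y2 + x) - g x - 'd g x y2)).
  rewrite lin /dphi /y1 /y2 addrA; ring.
rewrite normrM (ger0_norm (ltW t0)).
have : `|(g (y1 + x) - g x - 'd g x y1) - (g (y2 + x) - g x - 'd g x y2)| <= e * (t * C) + e * (t * C).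
  rewrite (le_trans (ler_normB _ _)) // lerD //.
    by rewrite (le_trans H1) // ler_wpM2l // ltW.
  by rewrite (le_trans H2) // ler_wpM2l // ltW.
move=> h; rewrite (le_trans (ler_wpM2l (ltW t0) h)) //.
rewrite le_eqVlt; apply/orP; left; apply/eqP; ring.
Qed.


Lemma schwarz_gen f u v x :
  (forall y, differentiable f y) -> (forall y, differentiable (fun a => 'D_v f a) y) ->
  (forall y, differentiable (fun a => 'D_u f a) y) ->
  'D_u (fun a => 'D_v f a) x = 'D_v (fun a => 'D_u f a) x.
Proof.
move=> hf hgv hgu.
set A := 'D_u _ x; set B := 'D_v _ x.
apply/eqP; rewrite -subr_eq0 -normr_eq0 eq_le normr_ge0 andbT.
apply/ler_addgt0Pr => e e0; rewrite add0r.
set C := `|u| + `|v|.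
have C0 : 0 <= C by rewrite /C addr_ge0.
set e' := e / (4 * C + 1).
have e'0 : 0 < e' by rewrite divr_gt0 // ltr_wpDl // mulr_ge0.
have [d1 d10 H1] := @schwarz_est f u v x hf hgv _ e'0.
have [d2 d20 H2] := @schwarz_est f v u x hf hgu _ e'0.
set t := Num.min d1 d2 / 2.
have md0 : 0 < Num.min d1 d2 by rewrite lt_min d10 d20.
have t0 : 0 < t by rewrite divr_gt0.
have md1 : Num.min d1 d2 <= d1 by rewrite ge_min lexx.
have md2 : Num.min d1 d2 <= d2 by rewrite ge_min lexx orbT.
have mlt : Num.min d1 d2 / 2 < Num.min d1 d2 by rewrite ltr_pdivrMr // ltr_pMr // ltr1n.
have td1 : t < d1 by apply: (lt_le_trans mlt).
have td2 : t < d2 by apply: (lt_le_trans mlt).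
have h1 := H1 t t0 td1.
have h2 := H2 t t0 td2.
rewrite [t *: v + t *: u]addrC -/C [`|v| + `|u|]addrC -/C in h2.
set D := f _ - _ - _ + _ in h1.
have t20 : 0 < t ^+ 2 by rewrite exprn_gt0.
have hD : `|A - B| * t ^+ 2 = `|(D - t ^+ 2 * B) - (D - t ^+ 2 * A)|.
  rewrite -[X in _ * X](ger0_norm (ltW t20)) -normrM; congr `|_|; ring.
have h : `|A - B| * t ^+ 2 <= e' * (2 * C) * t ^+ 2 + e' * (2 * C) * t ^+ 2.
  have sw : forall a b c d : R, a - b - c + d = a - c - b + d by move=> *; ring.
  rewrite (sw (f (t *: u + t *: v + x))) -/D in h2.
  rewrite hD; apply: (le_trans (ler_normB _ _)); apply: lerD; [exact: h2 | exact: h1].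
have h' : `|A - B| <= e' * (4 * C).
  rewrite -(ler_pM2r t20); apply: (le_trans h); rewrite le_eqVlt; apply/orP; left; apply/eqP; ring.
apply: (le_trans h').
rewrite /e'.
have q : 0 < 4 * C + 1 by rewrite ltr_wpDl // mulr_ge0.
by rewrite mulrAC ler_pdivrMr // ler_pM2l // lerDl.
Qed.

Lemma schwarz f k l x : smooth f ->
  partial k (partial l f) x = partial l (partial k f) x.
Proof.
move=> hs; apply: schwarz_gen.
- by move=> y; apply: smooth_diff.
- by move=> y; apply: (smooth_diff y (smooth_partial l hs)).
- by move=> y; apply: (smooth_diff y (smooth_partial k hs)).
Qed.

End Schwarz.

Opaque partial.

Lemma dform_mk (R : realType) (w : diffform R) b0 b1 b2 b3 :
  dform w (mk b0 b1 b2 b3) = fun y =>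
    (if b0 then sgn R [set o0] (mk b0 b1 b2 b3 :\ o0) * partial o0 (w (mk b0 b1 b2 b3 :\ o0)) y else 0)
  + (if b1 then sgn R [set o1] (mk b0 b1 b2 b3 :\ o1) * partial o1 (w (mk b0 b1 b2 b3 :\ o1)) y else 0)
  + (if b2 then sgn R [set o2] (mk b0 b1 b2 b3 :\ o2) * partial o2 (w (mk b0 b1 b2 b3 :\ o2)) y else 0)
  + (if b3 then sgn R [set o3] (mk b0 b1 b2 b3 :\ o3) * partial o3 (w (mk b0 b1 b2 b3 :\ o3)) y else 0).
Proof. by apply: funext => y; rewrite /dform big_mkcond sum4 !in_mk. Qed.

Lemma iprod_mk (R : realType) eta (w : diffform R) b0 b1 b2 b3 :
  iprod eta w (mk b0 b1 b2 b3) = fun y =>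
    (if ~~ b0 then eta o0 y * sgn R [set o0] (mk b0 b1 b2 b3) * w (o0 |: mk b0 b1 b2 b3) y else 0)
  + (if ~~ b1 then eta o1 y * sgn R [set o1] (mk b0 b1 b2 b3) * w (o1 |: mk b0 b1 b2 b3) y else 0)
  + (if ~~ b2 then eta o2 y * sgn R [set o2] (mk b0 b1 b2 b3) * w (o2 |: mk b0 b1 b2 b3) y else 0)
  + (if ~~ b3 then eta o3 y * sgn R [set o3] (mk b0 b1 b2 b3) * w (o3 |: mk b0 b1 b2 b3) y else 0).
Proof. by apply: funext => y; rewrite /iprod big_mkcond sum4 !in_mk. Qed.

Lemma mk_eq0 b0 b1 b2 b3 : (mk b0 b1 b2 b3 == finset.set0) = ~~ [|| b0, b1, b2 | b3].
Proof.
apply/eqP/idP.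
- move=> /setP H; have := H o0; have := H o1; have := H o2; have := H o3.
  by rewrite !inE /=; move=> -> -> -> ->.
- move=> h; apply/setP; apply: ord4P; rewrite !inE /=;
  by move: h; case: b0; case: b1; case: b2; case: b3.
Qed.

Lemma fn0_mk (R : realType) (f : pt R -> R) b0 b1 b2 b3 :
  fn0 f (mk b0 b1 b2 b3) = if [|| b0, b1, b2 | b3] then (fun _ => 0) else f.
Proof.
by apply: funext => y; rewrite /fn0 mk_eq0; case: ([|| b0, b1, b2 | b3]).
Qed.

Ltac norm := rewrite ?mk_setD1 ?mk_setU1 ?mk_set1 ?mk_setD /=; rewrite ?sgn_mk /=.

Ltac dtac := solve [repeat first [ apply: dC | apply: dD | apply: dM | apply: dN
  | (apply: smooth_diff; repeat apply: smooth_partial; by auto) ]].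

Ltac push := repeat first [ rewrite pC
  | rewrite pMc; [ | dtac ]
  | rewrite pD; [ | dtac | dtac ]
  | rewrite pM; [ | dtac | dtac ]
  | rewrite pN; [ | dtac ] ].

Ltac schw x := repeat match goal with
 | |- context [partial o1 (partial o0 ?f) x] => rewrite (@schwarz _ f o1 o0 x); last by auto
 | |- context [partial o2 (partial o0 ?f) x] => rewrite (@schwarz _ f o2 o0 x); last by auto
 | |- context [partial o3 (partial o0 ?f) x] => rewrite (@schwarz _ f o3 o0 x); last by auto
 | |- context [partial o2 (partial o1 ?f) x] => rewrite (@schwarz _ f o2 o1 x); last by auto
 | |- context [partial o3 (partial o1 ?f) x] => rewrite (@schwarz _ f o3 o1 x); last by auto
 | |- context [partial o3 (partial o2 ?f) x] => rewrite (@schwarz _ f o3 o2 x); last by auto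
 end.

Ltac lring := try rewrite [@partial _]lock; ring.

Lemma dd0 (R : realType) (w : diffform R) S x : (forall S, smooth (w S)) ->
  dform (dform w) S x = 0.
Proof.
move=> hs; rewrite (mkE S).
case: (o0 \in S); case: (o1 \in S); case: (o2 \in S); case: (o3 \in S);
rewrite dform_mk /=; norm; rewrite ?dform_mk /=; norm; push; schw x; lring.
Qed.

Ltac dtac ::= solve [repeat first [ apply: dC | apply: dD | apply: dM | apply: dN | by auto
  | (apply: smooth_diff; repeat apply: smooth_partial; by auto) ]].

Lemma closed_rels (R : realType) (A : diffform R) x :
  (forall S y, dform A S y = 0) ->
  [/\ partial o0 (A s12) x = partial o1 (A s02) x - partial o2 (A s01) x,
      partial o0 (A s13) x = partial o1 (A s03) x - partial o3 (A s01) x,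
      partial o0 (A s23) x = partial o2 (A s03) x - partial o3 (A s02) x &
      partial o1 (A s23) x = partial o2 (A s13) x - partial o3 (A s12) x].
Proof.
move=> hc.
have h1 := hc (mk true true true false) x.
have h2 := hc (mk true true false true) x.
have h3 := hc (mk true false true true) x.
have h4 := hc (mk false true true true) x.
move: h1 h2 h3 h4; rewrite !dform_mk /=; norm => h1 h2 h3 h4.
split; apply: subr0_eq.
- by rewrite -[RHS]h1; lring.
- by rewrite -[RHS]h2; lring.
- by rewrite -[RHS]h3; lring.
- by rewrite -[RHS]h4; lring.
Qed.

Lemma Leib (R : realType) (eta : 'I_4 -> pt R -> R) (A B : diffform R) x :
  (forall S y, differentiable (A S) y) -> (forall S y, differentiable (B S) y) ->
  (forall k y, differentiable (eta k) y) ->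
  (forall S y, dform A S y = 0) -> (forall S y, dform B S y = 0) ->
  partial o0 (fun y => eta o0 y * W22 A B y) x + partial o1 (fun y => eta o1 y * W22 A B y) x
  + partial o2 (fun y => eta o2 y * W22 A B y) x + partial o3 (fun y => eta o3 y * W22 A B y) x
  = W22 (dform (iprod eta A)) B x + W22 A (dform (iprod eta B)) x.
Proof.
move=> hA hB he cA cB.
have [a1 a2 a3 a4] := closed_rels x cA.
have [b1 b2 b3 b4] := closed_rels x cB.
rewrite !W22Ef /= !dform_mk /=; norm; rewrite !iprod_mk /=; norm.
push.
rewrite a1 a2 a3 a4 b1 b2 b3 b4.
lring.
Qed.

Ltac dtac ::= solve [repeat first [ apply: dC | apply: dD | apply: dM | apply: dN | by auto
  | (apply: smooth_diff; repeat apply: smooth_partial; by auto) ]].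

Section Forms.
Variable R : realType.
Implicit Types (w u v : diffform R) (f : pt R -> R) (x : pt R).

Lemma LemD (eta : 'I_4 -> pt R -> R) (Z : diffform R) x :
  (forall k, differentiable (eta k) x) -> differentiable (Z [set: 'I_4]) x ->
  dform (iprod eta Z) [set: 'I_4] x =
  partial o0 (fun y => eta o0 y * Z [set: 'I_4] y) x + partial o1 (fun y => eta o1 y * Z [set: 'I_4] y) x
  + partial o2 (fun y => eta o2 y * Z [set: 'I_4] y) x + partial o3 (fun y => eta o3 y * Z [set: 'I_4] y) x.
Proof.
rewrite mk_setT => he hZ.
rewrite dform_mk /=; norm; rewrite !iprod_mk /=; norm; push; lring.
Qed.

Lemma dPsiE (eta : 'I_4 -> pt R -> R) f x :
  iprod eta (dform (fn0 f)) finset.set0 x =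
  eta o0 x * partial o0 f x + eta o1 x * partial o1 f x
  + eta o2 x * partial o2 f x + eta o3 x * partial o3 f x.
Proof.
rewrite mk_set0 iprod_mk /=; norm; rewrite !dform_mk /=; norm; rewrite !fn0_mk /=; push; lring.
Qed.

Lemma dformD u v S x : (forall T, differentiable (u T) x) -> (forall T, differentiable (v T) x) ->
  dform (fun T y => u T y + v T y) S x = dform u S x + dform v S x.
Proof.
move=> hu hv; rewrite /dform -big_split; apply: eq_bigr => k _ /=.
by rewrite pD // mulrDr.
Qed.

Lemma dformZ (c : R) u S x : (forall T, differentiable (u T) x) ->
  dform (fun T y => c * u T y) S x = c * dform u S x.
Proof.
move=> hu; rewrite /dform mulr_sumr; apply: eq_bigr => k _ /=.
by rewrite pMc // mulrCA.
Qed.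

Lemma const_fun w S x : constant_form w -> w S = fun _ => w S x.
Proof. by move=> h; apply: funext => y; apply: h. Qed.

Lemma const_diff w S x : constant_form w -> differentiable (w S) x.
Proof. by move=> h; rewrite (const_fun S x h); apply: dC. Qed.

Lemma dform_cst w S x : constant_form w -> dform w S x = 0.
Proof.
move=> h; rewrite /dform big1 // => k _.
by rewrite (const_fun (S :\ k) x h) pC mulr0.
Qed.

Lemma smooth_fn0 f T : smooth f -> smooth (fn0 f T).
Proof.
rewrite /fn0 => hf; case: (T == finset.set0) => //.
exact: smooth_cst.
Qed.

Lemma diff_dform w T x : (forall S, smooth (w S)) -> differentiable (dform w T) x.
Proof.
move=> hs; rewrite /dform; apply: dSum => k; apply: dM; first exact: dC.
by apply: smooth_diff; apply: smooth_partial.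
Qed.

Lemma diff_iprod (eta : 'I_4 -> pt R -> R) w T x : (forall k, differentiable (eta k) x) ->
  (forall S, differentiable (w S) x) -> differentiable (iprod eta w T) x.
Proof.
move=> he hw; rewrite /iprod; apply: dSum => k; apply: dM; last exact: hw.
by apply: dM; [exact: he | exact: dC].
Qed.

Lemma deg_dform p w : is_deg p w -> is_deg p.+1 (dform w).
Proof.
move=> h S hS; apply: funext => y; rewrite /dform big1 // => k kS.
rewrite (h (S :\ k)) ?pC ?mulr0 //.
apply: contra hS; rewrite (cardsD1 k S) kS => /eqP -> //.
Qed.

Lemma deg_iprod p (eta : 'I_4 -> pt R -> R) w : is_deg p.+1 w -> is_deg p (iprod eta w).
Proof.
move=> h S hS; apply: funext => y; rewrite /iprod big1 // => k kS.
rewrite (h (k |: S)) ?mulr0 //.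
by apply: contra hS; rewrite cardsU1 kS.
Qed.

Lemma deg_wedge p q u v : is_deg p u -> is_deg q v -> is_deg (p + q) (wedge u v).
Proof.
move=> hu hv S hS; apply: funext => y; rewrite /wedge big1 // => A AS.
case: (eqVneq #|A| p) => hA; last by rewrite (hu A hA) mulr0 mul0r.
rewrite (hv (S :\: A)) ?mulr0 //.
rewrite cardsD (finset.setIidPr AS) hA.
apply: contra hS => /eqP <-.
rewrite subnKC //; rewrite -hA; exact: subset_leq_card.
Qed.

Lemma deg_fn0 f : is_deg 0 (fn0 f).
Proof.
move=> S hS; apply: funext => y; rewrite /fn0.
by case: eqP => // E; move: hS; rewrite E cards0.
Qed.

Lemma card4T (S : {set 'I_4}) : #|S| = 4%N -> S = [set: 'I_4].
Proof. by move=> h; apply/eqP; rewrite eqEcard finset.subsetT cardsT card_ord h. Qed.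

End Forms.

Ltac dtac ::= solve [repeat first [ apply: dC | apply: dD | apply: dM | apply: dN | by auto
  | (apply: smooth_diff; repeat apply: smooth_partial; by auto) ]].

Notation p0 := (@Ordinal 3 0 isT).
Notation p1 := (@Ordinal 3 1 isT).
Notation p2 := (@Ordinal 3 2 isT).

Lemma sum3 (V : nmodType) (F : 'I_3 -> V) : \sum_(i < 3) F i = F p0 + F p1 + F p2.
Proof.
rewrite !big_ord_recr big_ord0 /= add0r.
by congr (_ + _ + _); congr F; apply: val_inj.
Qed.

Section Final.
Variable R : realType.

Definition Dv (eta : 'I_4 -> pt R -> R) (f : pt R -> R) (x : pt R) :=
  partial o0 (fun y => eta o0 y * f y) x + partial o1 (fun y => eta o1 y * f y) x
  + partial o2 (fun y => eta o2 y * f y) x + partial o3 (fun y => eta o3 y * f y) x.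

Lemma RHSgroup (eta : 'I_4 -> pt R -> R) (P T : 'I_3 -> 'I_3 -> pt R -> R) (Z : pt R -> R) (x : pt R) :
  (forall k, differentiable (eta k) x) -> (forall i j, differentiable (P i j) x) ->
  (forall i j, differentiable (T i j) x) ->
  Z = (fun y => P p0 p0 y * T p0 p0 y + P p0 p1 y * T p0 p1 y + P p0 p2 y * T p0 p2 y + P p1 p0 y * T p1 p0 y + P p1 p1 y * T p1 p1 y + P p1 p2 y * T p1 p2 y + P p2 p0 y * T p2 p0 y + P p2 p1 y * T p2 p1 y + P p2 p2 y * T p2 p2 y) ->
  partial o0 (fun y => eta o0 y * Z y) x + partial o1 (fun y => eta o1 y * Z y) x + partial o2 (fun y => eta o2 y * Z y) x + partial o3 (fun y => eta o3 y * Z y) x = ((eta o0 x * partial o0 (P p0 p0) x + eta o1 x * partial o1 (P p0 p0) x + eta o2 x * partial o2 (P p0 p0) x + eta o3 x * partial o3 (P p0 p0) x) * T p0 p0 x + P p0 p0 x * Dv eta (T p0 p0) x) + ((eta o0 x * partial o0 (P p0 p1) x + eta o1 x * partial o1 (P p0 p1) x + eta o2 x * partial o2 (P p0 p1) x + eta o3 x * partial o3 (P p0 p1) x) * T p0 p1 x + P p0 p1 x * Dv eta (T p0 p1) x) + ((eta o0 x * partial o0 (P p0 p2) x + eta o1 x * partial o1 (P p0 p2) x + eta o2 x * partial o2 (P p0 p2) x + eta o3 x * partial o3 (P p0 p2) x) * T p0 p2 x + P p0 p2 x * Dv eta (T p0 p2) x) + ((eta o0 x * partial o0 (P p1 p0)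 x + eta o1 x * partial o1 (P p1 p0) x + eta o2 x * partial o2 (P p1 p0) x + eta o3 x * partial o3 (P p1 p0) x) * T p1 p0 x + P p1 p0 x * Dv eta (T p1 p0) x) + ((eta o0 x * partial o0 (P p1 p1) x + eta o1 x * partial o1 (P p1 p1) x + eta o2 x * partial o2 (P p1 p1) x + eta o3 x * partial o3 (P p1 p1) x) * T p1 p1 x + P p1 p1 x * Dv eta (T p1 p1) x) + ((eta o0 x * partial o0 (P p1 p2) x + eta o1 x * partial o1 (P p1 p2) x + eta o2 x * partial o2 (P p1 p2) x + eta o3 x * partial o3 (P p1 p2) x) * T p1 p2 x + P p1 p2 x * Dv eta (T p1 p2) x) + ((eta o0 x * partial o0 (P p2 p0) x + eta o1 x * partial o1 (P p2 p0) x + eta o2 x * partial o2 (P p2 p0) x + eta o3 x * partial o3 (P p2 p0) x) * T p2 p0 x + P p2 p0 x * Dv eta (T p2 p0) x) + ((eta o0 x * partial o0 (P p2 p1) x + eta o1 x * partial o1 (P p2 p1) x + eta o2 x * partial o2 (P p2 p1) x + eta o3 x * partial o3 (P p2 p1) x) * T p2 p1 x + P p2 p1 x * Dv eta (T p2 p1) x) + ((eta o0 x * partial o0 (P p2 p2) x + eta o1 x * partial o1 (P p2 p2) x + eta o2 x * partial o2 (P p2 p2) x + eta o3 x * partial o3 (P p2 p2) x) * T p2 p2 x + P p2 p2 x * Dv eta (T p2 p2) x).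
Proof.
move=> he hP hT ->; rewrite /Dv; push; lring.
Qed.

Lemma dW22 (A B : diffform R) x : (forall S, differentiable (A S) x) ->
  (forall S, differentiable (B S) x) -> differentiable (W22 A B) x.
Proof. by move=> hA hB; rewrite W22Ef; dtac. Qed.

Lemma Leib2 (eta : 'I_4 -> pt R -> R) (A B : diffform R) (c : R) x :
  (forall S y, differentiable (A S) y) -> (forall S y, differentiable (B S) y) ->
  (forall k y, differentiable (eta k) y) ->
  (forall S y, dform A S y = 0) -> (forall S y, dform B S y = 0) ->
  Dv eta (fun y => c * W22 A B y) x
  = c * (W22 (dform (iprod eta A)) B x + W22 A (dform (iprod eta B)) x).
Proof.
move=> hA hB he cA cB; rewrite -Leib // /Dv.
have e : forall k, partial k (fun y => eta k y * (c * W22 A B y)) x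
                 = c * partial k (fun y => eta k y * W22 A B y) x.
  move=> k; rewrite -pMc; last by apply: dM; [exact: he | apply: dW22].
  by congr partial; apply: funext => y; ring.
rewrite !e; ring.
Qed.

Lemma W22_lin (A B C D : diffform R) (c d : R) x :
  W22 (fun S y => c * A S y + B S y) (fun S y => d * C S y + D S y) x =
  c * d * W22 A C x + c * W22 A D x + d * W22 B C x + W22 B D x.
Proof. rewrite !W22Ef /=; ring. Qed.

Lemma W22_linl (A B C : diffform R) (c : R) x :
  W22 (fun S y => c * A S y + B S y) C x = c * W22 A C x + W22 B C x.
Proof. rewrite !W22Ef /=; ring. Qed.

Lemma W22_linr (A B C : diffform R) (c : R) x :
  W22 C (fun S y => c * A S y + B S y) x = c * W22 C A x + W22 C B x.
Proof. rewrite !W22Ef /=; ring. Qed.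

Lemma W22C (A B : diffform R) x : W22 A B x = W22 B A x.
Proof. rewrite !W22Ef /=; ring. Qed.

End Final.

Lemma LagT (R : realType) (H : 'I_3 -> diffform R) (vol : diffform R)
  (M : R) (a : 'I_3 -> diffform R) (Psi : 'I_3 -> 'I_3 -> pt R -> R) y :
  (forall i, is_deg 2 (H i)) -> (forall i, is_deg 2 (dform (a i))) ->
  (forall i j, wedge (H i) (H j) = (fun S x => (if i == j then 2 else 0) * vol S x)) ->
  (forall i j, Psi i j = Psi j i) ->
  (forall x, \sum_(i < 3) Psi i i x = 0) ->
  Lag M H Psi a [set: 'I_4] y = Psi p0 p0 y * (2^-1 * W22 (fun S x => M ^+ 2 * H p0 S x + dform (a p0) S x) (fun S x => M ^+ 2 * H p0 S x + dform (a p0) S x) y) + Psi p0 p1 y * (2^-1 * W22 (fun S x => M ^+ 2 * H p0 S x + dform (a p0) S x) (fun S x => M ^+ 2 * H p1 S x + dform (a p1) S x) y) + Psi p0 p2 y * (2^-1 * W22 (fun S x => M ^+ 2 * H p0 S x + dform (a p0) S x) (fun S x => M ^+ 2 * H p2 S x + dform (a p2) S x) y) + Psi p1 p0 y * (2^-1 * W22 (fun S x => M ^+ 2 * H p1 S x + dform (a p1) S x) (fun S x => M ^+ 2 * H p0 S x + dform (a p0) S x) y) + Psi p1 p1 y * (2^-1 * W22 (fun S x => M ^+ 2 * H p1 S x + dform (a p1) S x) (fun S x => M ^+ 2 * H p1 S x + dform (a p1) S x) y) + Psi p1 p2 y * (2^-1 * W22 (fun S x => M ^+ 2 * H p1 S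 x + dform (a p1) S x) (fun S x => M ^+ 2 * H p2 S x + dform (a p2) S x) y) + Psi p2 p0 y * (2^-1 * W22 (fun S x => M ^+ 2 * H p2 S x + dform (a p2) S x) (fun S x => M ^+ 2 * H p0 S x + dform (a p0) S x) y) + Psi p2 p1 y * (2^-1 * W22 (fun S x => M ^+ 2 * H p2 S x + dform (a p2) S x) (fun S x => M ^+ 2 * H p1 S x + dform (a p1) S x) y) + Psi p2 p2 y * (2^-1 * W22 (fun S x => M ^+ 2 * H p2 S x + dform (a p2) S x) (fun S x => M ^+ 2 * H p2 S x + dform (a p2) S x) y).
Proof.
move=> hHd hdad hHH hsym htr.
have wHH : forall i j, W22 (H i) (H j) y = (if i == j then 2 else 0) * vol [set: 'I_4] y.
  by move=> i j; rewrite -wedge22_top // hHH.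
have htrf : Psi p2 p2 y = - (Psi p0 p0 y + Psi p1 p1 y).
  have := htr y; rewrite sum3 => h.
  transitivity (Psi p0 p0 y + Psi p1 p1 y + Psi p2 p2 y - (Psi p0 p0 y + Psi p1 p1 y)); first by ring.
  by rewrite h sub0r.
have n01 : (p0 == p1) = false by []. have n02 : (p0 == p2) = false by [].
have n10 : (p1 == p0) = false by []. have n12 : (p1 == p2) = false by [].
have n20 : (p2 == p0) = false by []. have n21 : (p2 == p1) = false by [].
have Wl : forall (A B C D : diffform R) (c d : R),
  W22 (fun S y => c * A S y + B S y) (fun S y => d * C S y + D S y) y =
  c * d * W22 A C y + c * W22 A D y + d * W22 C B y + W22 B D y.
  by move=> A B C D c d; rewrite W22_lin (W22C B C).
rewrite /Lag.
under eq_bigr => i _ do under eq_bigr => j _ do rewrite (wedge22_top y (hHd i) (hdad j)) (wedge22_top y (hdad i) (hdad j)).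
rewrite [@dform _]lock.
rewrite !Wl.
rewrite !wHH !eqxx !n01 !n02 !n10 !n12 !n20 !n21.
rewrite [@W22 _]lock.
rewrite !sum3.
rewrite (hsym p1 p0) (hsym p2 p0) (hsym p2 p1).
rewrite htrf.
field.
by [].
Qed.

Ltac dtac ::= solve [repeat first [ apply: dC | apply: dD | apply: dM | apply: dN | by auto
  | (apply: smooth_diff; repeat apply: smooth_partial; by auto) ]].

Theorem mainTheorem2 (R : realType) (H : 'I_3 -> diffform R) (vol : diffform R)
  (M : R) (a : 'I_3 -> diffform R) (Psi : 'I_3 -> 'I_3 -> 'rV[R]_4 -> R)
  (eta : 'I_4 -> 'rV[R]_4 -> R) (xi : 'I_3 -> 'rV[R]_4 -> R) :
  (forall i, is_deg 2 (H i) /\ constant_form (H i)) ->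
  is_deg 4 vol -> constant_form vol -> (forall x, vol (finset.setTfor 'I_4) x != 0) ->
  (forall i j, wedge (H i) (H j) =
               (fun S x => (if i == j then 2 else 0) * vol S x)) ->
  0 < M ->
  (forall i, is_deg 1 (a i) /\ smooth_form (a i)) ->
  (forall i j, smooth (Psi i j)) ->
  (forall i j, Psi i j = Psi j i) ->
  (forall x, \sum_(i < 3) Psi i i x = 0) ->
  (forall k, smooth (eta k)) ->
  (forall i, smooth (xi i)) ->
  let F := fun i : 'I_3 => (fun S x => M ^+ 2 * H i S x + dform (a i) S x) in
  let delta_a := fun i : 'I_3 =>
    (fun S x => dform (fn0 (xi i)) S x + iprod eta (F i) S x) in
  let delta_Psi := fun i j : 'I_3 =>
    (fun x => iprod eta (dform (fn0 (Psi i j))) finset.set0 x) in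
  Lag_variation M H Psi a delta_Psi delta_a
  = dform (iprod eta (Lag M H Psi a)).
Proof.
move=> hHi hvd hvc hvnz hHH hM hai hPs hsym htr heta hxi F delta_a delta_Psi.
have hHd i : is_deg 2 (H i) := (hHi i).1.
have hHc i : constant_form (H i) := (hHi i).2.
have had i : is_deg 1 (a i) := (hai i).1.
have has i S : smooth (a i S) := (hai i).2 S.
have hed k y : differentiable (eta k) y := smooth_diff y (heta k).
have hPd i j y : differentiable (Psi i j) y := smooth_diff y (hPs i j).
have hdad i : is_deg 2 (dform (a i)) := deg_dform (had i).
have hFdeg i : is_deg 2 (F i).
  move=> S hS; apply: funext => y; rewrite /F /= (hHd i S hS) (hdad i S hS) /=.
  by rewrite mulr0 addr0.
have hFd i S y : differentiable (F i S) y.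
  rewrite /F /=; apply: dD; first by apply: dM; [exact: dC | exact: const_diff].
  exact: diff_dform.
have hFc i S y : dform (F i) S y = 0.
  rewrite /F /= dformD => [||T]; last exact: diff_dform.
    rewrite dformZ => [|T]; last exact: const_diff.
    by rewrite dform_cst // dd0 // mulr0 addr0.
  by move=> T; apply: dM; [exact: dC | exact: const_diff].
have hG j : dform (delta_a j) = dform (iprod eta (F j)).
  apply: funext => S; apply: funext => y; rewrite /delta_a.
  rewrite dformD => [||T].
  - by rewrite dd0 ?add0r // => T; exact: smooth_fn0.
  - by move=> T; apply: diff_dform => U; exact: smooth_fn0.
  - by apply: diff_iprod.
have hGdeg j : is_deg 2 (dform (iprod eta (F j))).
  by apply: deg_dform; apply: deg_iprod; exact: hFdeg.
have hdeltad j : is_deg 2 (dform (delta_a j)) by rewrite hG.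
have hLdeg : is_deg 4 (Lag M H Psi a).
  move=> S hS; apply: funext => y; rewrite /Lag big1 // => i _; rewrite big1 // => j _.
  rewrite (deg_wedge (hHd i) (hdad j) hS) (deg_wedge (hdad i) (hdad j) hS) /=.
  by rewrite !mulr0 addr0 mulr0.
apply: funext => S; apply: funext => x.
case: (eqVneq #|S| 4%N) => hS; last first.
  rewrite (deg_dform (deg_iprod (p := 3) eta hLdeg) hS) /=.
  rewrite /Lag_variation big1 // => i _; rewrite big1 // => j _.
  rewrite (deg_wedge (hHd i) (hdad j) hS) (deg_wedge (hdad i) (hdad j) hS).
  rewrite (deg_wedge (hHd i) (hdeltad j) hS) (deg_wedge (hdeltad i) (hdad j) hS).
  rewrite (deg_wedge (hdad i) (hdeltad j) hS) /=.
  ring.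
rewrite (card4T hS).
pose T := fun i j (y : pt R) => 2^-1 * W22 (F i) (F j) y.
have hed' : forall k, differentiable (eta k) x by move=> k; exact: hed.
have hPd' : forall i j, differentiable (Psi i j) x by move=> i j; exact: hPd.
have hTd : forall i j, differentiable (T i j) x.
  by move=> i j; rewrite /T; apply: dM; [exact: dC | apply: dW22 => U; exact: hFd].
have hLagT : Lag M H Psi a [set: 'I_4] = fun y => Psi p0 p0 y * T p0 p0 y + Psi p0 p1 y * T p0 p1 y + Psi p0 p2 y * T p0 p2 y + Psi p1 p0 y * T p1 p0 y + Psi p1 p1 y * T p1 p1 y + Psi p1 p2 y * T p1 p2 y + Psi p2 p0 y * T p2 p0 y + Psi p2 p1 y * T p2 p1 y + Psi p2 p2 y * T p2 p2 y.
  by apply: funext => y; apply: LagT.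
rewrite LemD; [ | exact: hed' | by rewrite hLagT; repeat (apply: dD || (apply: dM; [exact: hPd' | exact: hTd]))].
rewrite (RHSgroup hed' hPd' hTd hLagT).
have L2 : forall i j, Dv eta (T i j) x = 2^-1 * (W22 (dform (iprod eta (F i))) (F j) x + W22 (F i) (dform (iprod eta (F j))) x).
  by move=> i j; rewrite /T; apply: Leib2.
rewrite !L2.
rewrite /Lag_variation /delta_Psi.
under eq_bigr => i _ do under eq_bigr => j _ do
  rewrite dPsiE !hG (wedge22_top x (hHd i) (hdad j)) (wedge22_top x (hdad i) (hdad j))
    (wedge22_top x (hHd i) (hGdeg j)) (wedge22_top x (hGdeg i) (hdad j)) (wedge22_top x (hdad i) (hGdeg j)).
have n01 : (p0 == p1) = false by []. have n02 : (p0 == p2) = false by [].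
have n10 : (p1 == p0) = false by []. have n12 : (p1 == p2) = false by [].
have n20 : (p2 == p0) = false by []. have n21 : (p2 == p1) = false by [].
have wHH : forall i j, W22 (H i) (H j) x = (if i == j then 2 else 0) * vol [set: 'I_4] x.
  by move=> i j; rewrite -wedge22_top // hHH.
have Wl : forall (A B C D : diffform R) (c d : R),
  W22 (fun S y => c * A S y + B S y) (fun S y => d * C S y + D S y) x =
  c * d * W22 A C x + c * W22 A D x + d * W22 C B x + W22 B D x.
  by move=> A B C D c d; rewrite W22_lin (W22C B C).
have Wr : forall (A B C : diffform R) (c : R),
  W22 C (fun S y => c * A S y + B S y) x = c * W22 A C x + W22 C B x.
  by move=> A B C c; rewrite W22_linr (W22C C A).
have htrx : Psi p2 p2 x = - (Psi p0 p0 x + Psi p1 p1 x).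
  have := htr x; rewrite sum3 => h.
  transitivity (Psi p0 p0 x + Psi p1 p1 x + Psi p2 p2 x - (Psi p0 p0 x + Psi p1 p1 x)); first by ring.
  by rewrite h sub0r.
have htrp : forall k, partial k (Psi p2 p2) x = - (partial k (Psi p0 p0) x + partial k (Psi p1 p1) x).
  move=> k; rewrite (_ : Psi p2 p2 = fun y => - (Psi p0 p0 y + Psi p1 p1 y)); first by push.
  apply: funext => y; have := htr y; rewrite sum3 => h.
  transitivity (Psi p0 p0 y + Psi p1 p1 y + Psi p2 p2 y - (Psi p0 p0 y + Psi p1 p1 y)); first by ring.
  by rewrite h sub0r.
rewrite /T /F; cbv beta.
rewrite [@dform _]lock [@iprod _]lock.
rewrite !Wl !Wr !W22_linl.
rewrite !wHH !eqxx !n01 !n02 !n10 !n12 !n20 !n21.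
rewrite !sum3.
rewrite (hsym p1 p0) (hsym p2 p0) (hsym p2 p1).
rewrite !htrp htrx.
rewrite [@W22 _]lock [@partial _]lock.
field.
all: by [].
Qed.
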